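(* Let $k\geq 2$ and $n\geq k$ be integers. Then in $\mathcal{H}$, $$ \sum_{\substack{r, s_i\geq 1\\ r+s_1+\cdots +s_{k-1}=n}} z_{r}\,\tilde{\sqcup}\, z_{s_1,\dots, s_{k-1}} = \sum_{\substack{t_i\geq 1\\ t_1+\cdots+t_{k}=n}} C(t_1,\dots, t_{k-1})\, z_{t_1,\dots, t_{k}}. $$
   Context: Let $\mathcal{H}$ be the free $\mathbb{Z}$-module on words in letters $z_s$ ($s\geq1$), with $z_{s_1,\dots,s_k}:=z_{s_1}\cdots z_{s_k}$ and $1$ the empty word. Let $\mathbb{Z}\langle x_0,x_1\rangle$ be the free $\mathbb{Z}$-module on words in two letters $x_0,x_1$, with the shuffle product $\sqcup$ defined bilinearly and recursively by $1\sqcup u=u\sqcup 1=u$ and $(au)\sqcup(bv)=a(u\sqcup (bv))+b((au)\sqcup v)$ for letters $a,b\in\{x_0,x_1\}$ and words $u,v$. Let $\rho$ be the $\mathbb{Z}$-linear bijection from $\mathbb{Z}\oplus \mathbb{Z}\langle x_0,x_1\rangle x_1$ (span of $1$ and words ending in $x_1$) onto $\mathcal{H}$ given by $\rho(1)=1$ and $\rho(x_0^{s_1-1}x_1\cdots x_0^{s_k-1}x_1)=z_{s_1,\dots,s_k}$. Define the product $\tilde{\sqcup}$ on $\mathcal{H}$ by $w_1\,\tilde{\sqcup}\,w_2=\rho\big(\rho^{-1}(w_1)\sqcup\rho^{-1}(w_2)\big)$. For positive integers $t_1,\dots,t_{k-1}$ ($k\geq 2$) with $T_j=t_1+\cdots+t_j$,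 set $C(t_1,\dots,t_{k-1})=\sum_{j=1}^{k-1}2^{T_j-j}+2^{T_{k-1}-(k-1)}$ (so for $k=2$, $C(t_1)=2^{t_1}$). *)

(* Defs.v *)
From mathcomp Require Import all_boot all_order all_algebra.
Set Implicit Arguments. Unset Strict Implicit. Unset Printing Implicit Defensive.
Import GRing.Theory Num.Theory.

(* Words in x0, x1 : false = x0, true = x1. *)
Definition word := seq bool.

(* Shuffle of two words, as the list (multiset) of words occurring with
   multiplicity in u ш v (each with coefficient 1). *)
Fixpoint shuffle (u v : word) {struct u} : seq word :=
  match u with
  | [::] => [:: v]
  | a :: u' =>
    let fix sh_v (v : word) : seq word :=
      match v with
      | [::] => [:: u]
      | b :: v' => map (cons a) (shuffle u' v) ++ map (cons b) (sh_v v')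
      end in sh_v v
  end.

Definition rho_inv (s : seq nat) : word :=
  flatten [seq rcons (nseq i.-1 false) true | i <- s].

(* rho on words ending in x1 (or empty): decode into indices. *)
Fixpoint rho_aux (c : nat) (w : word) : seq nat :=
  match w with
  | [::] => [::]
  | false :: w' => rho_aux c.+1 w'
  | true :: w' => c.+1 :: rho_aux 0 w'
  end.
Definition rho (w : word) : seq nat := rho_aux 0 w.

(* Elements of H (free Z-module on words z_{s_1..s_k}) are represented by
   their coefficient functions seq nat -> int (finitely supported). *)
Definition Helt := seq nat -> int.

Definition zH (s : seq nat) : Helt := fun w => Posz (w == s).

Definition tshuffle (s t : seq nat) : Helt :=
  fun w => (\sum_(u <- shuffle (rho_inv s) (rho_inv t)) zH (rho u) w)%R.

Fixpoint comps (m n : nat) : seq (seq nat) :=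
  match m with
  | 0 => if n == 0 then [:: [::]] else [::]
  | m'.+1 => flatten [seq [seq i :: t | t <- comps m' (n - i)] | i <- iota 1 n]
  end.

Definition Ccoef (t : seq nat) : nat :=
  \sum_(1 <= j < (size t).+1) 2 ^ (sumn (take j t) - j) + 2 ^ (sumn t - size t).

Example tshuffle_test1 : tshuffle [:: 1] [:: 1] [:: 1; 1] = Posz 2. Proof. by rewrite /tshuffle unlock. Qed.
Example tshuffle_test2 : tshuffle [:: 1] [:: 2] [:: 2; 1] = Posz 2. Proof. by rewrite /tshuffle unlock. Qed.
Example comps_test : comps 2 3 = [:: [:: 1; 2]; [:: 2; 1]]. Proof. by []. Qed.

(* Main.v *)
Require Import Defs.
From mathcomp Require Import all_boot all_order all_algebra.
From mathcomp Require Import zify.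
Import GRing.Theory Num.Theory.
Set Implicit Arguments. Unset Strict Implicit. Unset Printing Implicit Defensive.

Definition endsT (u : word) := last true u.
Definition posw (s : seq nat) := all (fun i => 0 < i) s.
Definition ri := rho_inv.

Lemma endsT_cons x u : endsT (x :: u) = if u is [::] then x else endsT u.
Proof. by case: u. Qed.

Lemma ri_cons i s : ri (i :: s) = nseq i.-1 false ++ true :: ri s.
Proof. by rewrite /ri /rho_inv /= cat_rcons. Qed.

Lemma endsT_ri s : endsT (ri s).
Proof.
elim: s => [|i s IH] //; rewrite ri_cons /endsT last_cat /=.
by move: IH; rewrite /endsT; case: (ri s).
Qed.

Lemma count_ri s : count id (ri s) = size s.
Proof.
elim: s => [|i s IH] //; rewrite ri_cons count_cat /= IH.
by rewrite (_ : count id (nseq i.-1 false) = 0) //; elim: i.-1.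
Qed.

Lemma size_ri s : posw s -> size (ri s) = sumn s.
Proof.
elim: s => [|i s IH] //= /andP [hi hs]; rewrite ri_cons size_cat size_nseq /= IH //.
lia.
Qed.

Lemma rho_aux_nseq c m r : rho_aux c (nseq m false ++ true :: r) = (c + m).+1 :: rho_aux 0 r.
Proof. by elim: m c => [|m IH] c /=; rewrite ?addn0 // IH addSnnS. Qed.

Lemma rho_ri s : posw s -> rho (ri s) = s.
Proof.
elim: s => [|i s IH] //= /andP [hi hs]; rewrite ri_cons /rho rho_aux_nseq add0n.
by rewrite prednK // -/(rho _) IH.
Qed.

Lemma ri_rho_aux u c : endsT u -> ri (rho_aux c u) = if u is [::] then [::] else nseq c false ++ u.
Proof.
elim: u c => [|x u IH] c //=; rewrite endsT_cons; case: x => /=.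
  move=> e; rewrite /ri /rho_inv /= -/(rho_inv _) -/(ri _) cat_rcons.
  have e' : endsT u by case: (u) e.
  by rewrite IH //; case: (u).
case: u IH => [|y u] IH //= e; rewrite IH //=.
by rewrite !cat_nseq; elim: c => //= c ->.
Qed.

Lemma ri_rho u : endsT u -> ri (rho u) = u.
Proof. by move=> e; rewrite /rho ri_rho_aux //; case: u e. Qed.

Lemma pos_rho_aux c u : posw (rho_aux c u).
Proof. by elim: u c => [|[] u IH] c //=. Qed.

Lemma size_rho_aux c u : size (rho_aux c u) = count id u.
Proof. by elim: u c => [|[] u IH] c //=; rewrite IH. Qed.

Lemma sumn_rho u : endsT u -> sumn (rho u) = size u.
Proof. by move=> e; rewrite -{2}(ri_rho e) size_ri //; apply: pos_rho_aux. Qed.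

Lemma eq_rho u w : endsT u -> (w == rho u) = posw w && (u == ri w).
Proof.
move=> e; apply/idP/idP.
  by move/eqP->; rewrite {1}/rho pos_rho_aux ri_rho //= eqxx.
by case/andP=> pw /eqP ->; rewrite rho_ri.
Qed.

Lemma eq_ri b s : posw s -> (b == ri s) = endsT b && (rho b == s).
Proof.
move=> ps; apply/idP/idP.
  by move/eqP->; rewrite endsT_ri rho_ri //= eqxx.
by case/andP=> e /eqP <-; rewrite ri_rho.
Qed.

Lemma shuffle_cc x a y b : shuffle (x::a) (y::b) = map (cons x) (shuffle a (y::b)) ++ map (cons y) (shuffle (x::a) b).
Proof. by []. Qed.

Lemma shuffle_nil_r a : shuffle a [::] = [:: a].
Proof. by case: a. Qed.

Lemma endsT_tail x a : endsT (x :: a) -> endsT a.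
Proof. by case: a. Qed.

Lemma shuffle_prop a b : endsT a -> endsT b ->
  all (fun u => endsT u && (size u == size a + size b)) (shuffle a b).
Proof.
elim: a b => [|x a IHa] b.
  by move=> _ eb /=; rewrite eb eqxx.
elim: b => [|y b IHb] ea eb.
  by rewrite shuffle_nil_r /= ea addn0 eqxx.
rewrite shuffle_cc all_cat !all_map; apply/andP; split.
  have ea' := endsT_tail ea.
  apply/allP => u /(allP (IHa _ ea' eb)) /andP [eu /eqP su] /=.
  rewrite endsT_cons su /= addSn eqxx andbT.
  by case: u eu su => [|z u] //=; rewrite addnS.
have eb' := endsT_tail eb.
apply/allP => u /(allP (IHb ea eb')) /andP [eu /eqP su] /=.
rewrite endsT_cons su /= addnS eqxx andbT.
by case: u eu su => [|z u] //=; rewrite addSn.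
Qed.

Fixpoint dsh (W : word) : seq (word * word) :=
  match W with
  | [::] => [:: ([::], [::])]
  | c :: W' => [seq (c :: z.1, z.2) | z <- dsh W'] ++ [seq (z.1, c :: z.2) | z <- dsh W']
  end.

Lemma count_cons_map (x c : bool) (W : word) (s : seq word) :
  count_mem (c :: W) (map (cons x) s) = (x == c) * count_mem W s.
Proof.
rewrite count_map; case: eqP => [->|ne] /=.
  by rewrite mul1n; apply: eq_count => u /=; rewrite eqseq_cons eqxx.
by rewrite mul0n; apply/eqP; rewrite -leqn0 leqNgt -has_count; apply/hasPn => u _ /=;
   rewrite eqseq_cons; case: eqP.
Qed.

Lemma count_dsh1 (c : bool) a b (D : seq (word * word)) :
  count_mem (a, b) (map (fun z => (c :: z.1, z.2)) D) =
  if a is x :: a' then (x == c) * count_mem (a', b) D else 0.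
Proof.
rewrite count_map; case: a => [|x' a'].
  by apply/eqP; rewrite -leqn0 leqNgt -has_count; apply/hasPn => u _.
case: eqP => [->|ne] /=.
  by rewrite mul1n; apply: eq_count => u /=; rewrite !xpair_eqE eqseq_cons eqxx.
by rewrite mul0n; apply/eqP; rewrite -leqn0 leqNgt -has_count; apply/hasPn => u _ /=;
   rewrite xpair_eqE eqseq_cons; case: eqP => // ?; subst.
Qed.

Lemma count_dsh2 (c : bool) a b (D : seq (word * word)) :
  count_mem (a, b) (map (fun z => (z.1, c :: z.2)) D) =
  if b is y :: b' then (y == c) * count_mem (a, b') D else 0.
Proof.
rewrite count_map; case: b => [|y b'].
  by apply/eqP; rewrite -leqn0 leqNgt -has_count; apply/hasPn => u _ /=; rewrite xpair_eqE; case: (_ == _).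
case: eqP => [->|ne] /=.
  by rewrite mul1n; apply: eq_count => u /=; rewrite !xpair_eqE eqseq_cons eqxx.
by rewrite mul0n; apply/eqP; rewrite -leqn0 leqNgt -has_count; apply/hasPn => u _ /=;
   rewrite xpair_eqE eqseq_cons; case: (u.1 == a) => //=; case: eqP => // ?; subst.
Qed.

Lemma count_cons_map0 (x : bool) (s : seq word) :
  count_mem [::] (map (cons x) s) = 0.
Proof. by rewrite count_map; apply/eqP; rewrite -leqn0 leqNgt -has_count; apply/hasPn. Qed.

Lemma count_shuffle W a b : count_mem W (shuffle a b) = count_mem (a, b) (dsh W).
Proof.
elim: W a b => [|c W IH] a b.
  case: a => [|x a]; case: b => [|y b] //.
  by rewrite shuffle_cc count_cat !count_cons_map0.
rewrite /= count_cat count_dsh1 (count_dsh2 c a b).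
case: a => [|x a]; case: b => [|y b].
- by [].
- rewrite -IH /= eqseq_cons eq_sym.
  by rewrite add0n !addn0 mulnb.
- rewrite -IH shuffle_nil_r /= eqseq_cons eq_sym.
  by rewrite !addn0 shuffle_nil_r /= addn0 mulnb.
by rewrite (shuffle_cc x a y b) count_cat !count_cons_map !IH.
Qed.

Definition isE j (b : word) := endsT b && (count id b == j).

Lemma endsT_count b : endsT b -> b != [::] -> 0 < count id b.
Proof.
case: b => [|x b] // e _; rewrite -has_count; apply/hasP; exists true => //.
by have := mem_last x b; move: e; rewrite /endsT /= => ->.
Qed.

Lemma isE_false j b : isE j (false :: b) = (0 < j) && isE j b.
Proof.
rewrite /isE endsT_cons /=; case: b => [|y b] //=; first by case: j.
rewrite add0n; case e: (endsT (y :: b)); last by rewrite /= andbF.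
have := endsT_count e; rewrite /= => /(_ isT) h.
by case: eqP => [<-|_]; rewrite ?h ?andbF.
Qed.

Lemma isE_true j b : isE j (true :: b) = if j is j'.+1 then isE j' b else false.
Proof.
rewrite /isE endsT_cons /= add1n; case: j => [|j] /=; first by rewrite andbF.
by rewrite eqSS; case: b.
Qed.

Lemma isE0 a : isE 0 a = (a == [::]).
Proof.
rewrite /isE; case: a => [|x a] //=; case e: (endsT (x :: a)) => //=.
by have := endsT_count e isT => /= h; apply/negbTE; rewrite -lt0n.
Qed.

Lemma isE_ri j s : isE j (ri s) = (size s == j).
Proof. by rewrite /isE endsT_ri count_ri. Qed.

Lemma dsh_nil (P : pred word) W : count (fun z => (z.1 == [::]) && P z.2) (dsh W) = P W.
Proof.
elim: W P => [|c W IH] P /=; first by rewrite addn0.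
rewrite count_cat !count_map /=.
rewrite (_ : count _ _ = 0); last by apply/eqP; rewrite -leqn0 leqNgt -has_count; apply/hasPn.
by rewrite add0n (IH (fun w => P (c :: w))).
Qed.

Definition Qf j W := count (fun z : word * word => isE 1 z.1 && isE j z.2) (dsh W).

Lemma Qf_nil j : Qf j [::] = 0.
Proof. by []. Qed.

Lemma Qf_false j W : Qf j (false :: W) = (if j is 0 then 1 else 2) * Qf j W.
Proof.
rewrite /Qf /= count_cat !count_map.
rewrite (eq_count (a2 := fun z : word * word => isE 1 z.1 && isE j z.2)); last first.
  by move=> z /=; rewrite isE_false.
rewrite (eq_count (a1 := preim _ _) (a2 := fun z : word * word => (0 < j) && (isE 1 z.1 && isE j z.2))); last first.
  by move=> z /=; rewrite isE_false; case: (0 < j); rewrite ?andbF.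
by case: j => [|j] /=; rewrite ?count_pred0 ?addn0 ?mul1n // mul2n -addnn.
Qed.

Lemma Qf_true j W : Qf j (true :: W) = isE j W + (if j is j'.+1 then Qf j' W else 0).
Proof.
rewrite /Qf /= count_cat !count_map.
rewrite (eq_count (a1 := preim _ _) (a2 := fun z : word * word => (z.1 == [::]) && isE j z.2)); last first.
  by move=> z /=; rewrite isE_true isE0.
rewrite dsh_nil; congr (_ + _).
case: j => [|j].
  by apply/eqP; rewrite -leqn0 leqNgt -has_count; apply/hasPn => z _ /=; rewrite isE_true andbF.
by apply: eq_count => z /=; rewrite isE_true.
Qed.

Lemma Qf_nseq j c W : Qf j (nseq c false ++ W) = (if j is 0 then 1 else 2 ^ c) * Qf j W.
Proof.
elim: c => [|c IH]; first by case: (j) => [|j']; rewrite /= mul1n.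
rewrite /= Qf_false IH; case: (j) => [|j'] //=; first by rewrite mul1n.
by rewrite expnS mulnA.
Qed.

Lemma sumn_take_ge s j : posw s -> j <= size s -> j <= sumn (take j s).
Proof.
elim: s j => [|x s IH] [|j] //= /andP [hx hs] hj.
by have := IH j hs hj; lia.
Qed.

Lemma posw_take s j : posw s -> posw (take j s).
Proof. by move=> h; rewrite /posw -(cat_take_drop j s) all_cat in h; case/andP: h. Qed.

Lemma Ccoef_cons t u : posw (t :: u) -> Ccoef (t :: u) = 2 ^ t.-1 * (1 + Ccoef u).
Proof.
move=> /= /andP [ht hu]; rewrite /Ccoef /= big_nat_recl //=.
have -> : take 0 u = [::] by case: u {hu}.
rewrite mulnDr muln1 mulnDr big_distrr /= -!addnA; congr (_ + _).
  by congr (2 ^ _); rewrite /=; lia.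
congr (_ + _).
  rewrite !big_nat; apply: eq_bigr => j /andP [hj1 hj2].
  have h : j <= sumn (take j u) by apply: sumn_take_ge.
  by rewrite -expnD; congr (2 ^ _); lia.
by rewrite -expnD; congr (2 ^ _); have := @sumn_take_ge u (size u) hu (leqnn _); rewrite take_size; lia.
Qed.

Lemma QfC w : posw w -> forall j, Qf j (ri w) = if size w == j.+1 then Ccoef (take j w) else 0.
Proof.
elim: w => [|t w IH] //= /andP [ht hw] j.
rewrite ri_cons Qf_nseq Qf_true isE_ri eqSS.
case: j => [|j] /=.
  rewrite mul1n addn0; case: (size w == 0) => //.
  by rewrite /Ccoef /= big_nil.
rewrite IH //; case: eqP => [hs|_]; last by rewrite muln0.
by rewrite Ccoef_cons //= ht; exact: posw_take.
Qed.

Lemma count_sum (T : Type) (a : pred T) s : count a s = \sum_(x <- s) a x.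
Proof. by elim: s => [|x s IH]; rewrite ?big_nil ?big_cons //= IH. Qed.

Lemma count_mapcons (T : eqType) (x : T) (v : seq T) (s : seq (seq T)) :
  count_mem v (map (cons x) s) = if v is h :: v' then (x == h) * count_mem v' s else 0.
Proof.
rewrite count_map; case: v => [|h v].
  by apply/eqP; rewrite -leqn0 leqNgt -has_count; apply/hasPn.
case: eqP => [->|ne] /=.
  by rewrite mul1n; apply: eq_count => u /=; rewrite eqseq_cons eqxx.
by rewrite mul0n; apply/eqP; rewrite -leqn0 leqNgt -has_count; apply/hasPn => u _ /=;
   rewrite eqseq_cons; case: eqP.
Qed.

Lemma pick_iota a len c F : \sum_(i <- iota a len) (i == c) * F i = (a <= c < a + len) * F c.
Proof.
elim: len a => [|len IH] a.
  by rewrite big_nil addn0; case: (leqP a c) => h /=; rewrite mul0n.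
rewrite -[iota a len.+1]/(a :: iota a.+1 len) big_cons IH; case: eqP => [<-|ne].
  by rewrite leqnn ltnn /= mul0n addn0 mul1n addnS ltnS leq_addr mul1n.
rewrite /= mul0n add0n; congr (_ * _); congr (nat_of_bool _).
by apply/idP/idP => /andP [h1 h2]; apply/andP; split => //; lia.
Qed.

Lemma count_comps j m s : count_mem s (comps j m) = posw s && (size s == j) && (sumn s == m).
Proof.
elim: j m s => [|j IH] m s.
  by rewrite /=; case: m => [|m]; case: s => [|x s] //=; rewrite ?andbF ?andFb.
rewrite -[comps j.+1 m]/(flatten [seq [seq i :: t | t <- comps j (m - i)] | i <- iota 1 m]).
rewrite count_flatten sumnE !big_map.
under eq_bigr => i _ do rewrite count_mapcons.
case: s => [|h s]; first by rewrite big1.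
under eq_bigr => i _ do rewrite IH.
rewrite pick_iota /= eqSS.
case: (posw s); case: (size s == j); rewrite /= ?andbF ?muln0 ?andbT ?muln1 //.
by case: (ltnP 0 h) => h0; case: eqP; case: eqP => //=; lia.
Qed.

Lemma mem_comps_pos j m s : s \in comps j m -> posw s.
Proof.
rewrite -has_pred1 has_count count_comps.
by case: (posw s).
Qed.

Lemma sum_comps_ri j m b : \sum_(s <- comps j m) (b == ri s) = isE j b && (size b == m).
Proof.
rewrite big_seq.
under eq_bigr => s hs do rewrite (eq_ri b (mem_comps_pos hs)).
rewrite -big_seq /isE; case e: (endsT b) => /=; last by rewrite big1.
rewrite -(count_sum (fun s => rho b == s)).
rewrite (eq_count (a2 := pred1 (rho b))); last by move=> s /=; rewrite eq_sym.
rewrite count_comps /rho pos_rho_aux size_rho_aux -/(rho b) sumn_rho //.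
Qed.

Lemma eq_ri1 a i : 0 < i -> (a == ri [:: i]) = isE 1 a && (size a == i).
Proof.
move=> hi; rewrite eq_ri /= ?hi // /isE; case e: (endsT a) => //=.
have hs := size_rho_aux 0 a; have hsum := sumn_rho e.
rewrite -/(rho a) in hs; rewrite -hs -hsum.
by case: (rho a) => [|x [|y r]] //=; rewrite ?addn0 // eqseq_cons; case: (x == i).
Qed.

Lemma isE1_size a : isE 1 a -> 0 < size a.
Proof. by case: a => [|x a] //; rewrite /isE /= andbF. Qed.

Lemma sum_comps_g j n a b :
  \sum_(p <- comps j.+1 n) ((a, b) == (ri [:: head 0 p], ri (behead p))) =
  isE 1 a && isE j b && (size a + size b == n).
Proof.
rewrite -[comps j.+1 n]/(flatten [seq [seq i :: t | t <- comps j (n - i)] | i <- iota 1 n]).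
rewrite big_flatten big_map.
under eq_bigr => i _ do rewrite big_map /=.
under eq_bigr => i _ do under eq_bigr => t _ do rewrite xpair_eqE -mulnb.
under eq_bigr => i _ do rewrite -big_distrr /= sum_comps_ri.
rewrite big_seq (eq_bigr (fun i => (i == size a) * (isE 1 a * (isE j b && (size b == n - i))))); last first.
  move=> i; rewrite mem_iota => /andP [hi _]; rewrite eq_ri1 // eq_sym.
  by case: (isE 1 a); case: (_ == _); rewrite /= ?mul0n ?mul1n.
rewrite -big_seq.
rewrite pick_iota.
case h1: (isE 1 a); rewrite /= ?mul0n ?muln0 ?mul1n //.
have := isE1_size h1; case: (isE j b); rewrite /= ?muln0 ?mul1n //.
by move=> hs; case: eqP; case: eqP; case: (ltnP 0 (size a)); case: (ltnP (size a) (1 + n)) => /=; lia.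
Qed.

Lemma dsh_size W : all (fun z : word * word => size z.1 + size z.2 == size W) (dsh W).
Proof.
elim: W => [|c W IH] //=; rewrite all_cat !all_map.
by apply/andP; split; apply/allP => z /(allP IH) /eqP /= <-; rewrite ?addSn ?addnS.
Qed.

Lemma sumPosz (T : Type) (s : seq T) (F : T -> nat) :
  (\sum_(x <- s) (Posz (F x)))%R = Posz (\sum_(x <- s) F x).
Proof. by elim: s => [|x s IH]; rewrite ?big_nil ?big_cons // IH PoszD. Qed.

Lemma sum_eq_pick (T : eqType) (s : seq T) (F : T -> nat) w :
  \sum_(t <- s) F t * (w == t) = F w * count_mem w s.
Proof.
elim: s => [|t s IH]; rewrite ?big_nil ?muln0 // big_cons IH /= mulnDr eq_sym.
by case: eqP => [->|]; rewrite ?muln1 ?muln0.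
Qed.

Local Open Scope ring_scope.

Lemma tsh_eq (p : seq nat) w :
  tshuffle [:: head 0%N p] (behead p) w =
  Posz (posw w * count_mem (ri [:: head 0%N p], ri (behead p)) (dsh (ri w)))%N.
Proof.
rewrite /tshuffle /zH sumPosz -count_sum -count_shuffle; congr Posz.
set S := shuffle _ _.
have hS := shuffle_prop (endsT_ri [:: head 0%N p]) (endsT_ri (behead p)).
rewrite -/(ri _) -/(ri _) -/S in hS.
rewrite (eq_in_count (a1 := fun u => w == rho u) (a2 := fun u => posw w && (u == ri w))); last first.
  by move=> u /(allP hS) /andP [e _]; rewrite eq_rho.
by case: (posw w); rewrite /= ?mul1n ?mul0n ?count_pred0.
Qed.

Theorem theorem2p5 (k n : nat) (hk : (2 <= k)%N) (hn : (k <= n)%N) :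
  forall w : seq nat,
    \sum_(p <- comps k n) tshuffle [:: head 0%N p] (behead p) w
    = \sum_(t <- comps k n) (Ccoef (take k.-1 t))%:Z * zH t w.
Proof.
move=> w; case: k hk hn => [|j] // _ _.
under eq_bigr => p _ do rewrite tsh_eq.
under [RHS]eq_bigr => t _ do rewrite /zH -PoszM.
rewrite !sumPosz; congr Posz.
rewrite sum_eq_pick count_comps.
case hw: (posw w); last by rewrite big1 ?muln0 // => p _; rewrite mul0n.
under eq_bigr => p _ do rewrite mul1n.
have -> : (\sum_(p <- comps j.+1 n) count_mem (ri [:: head 0%N p], ri (behead p)) (dsh (ri w)))%N
   = ((size (ri w) == n) * Qf j (ri w))%N.
  have -> : (\sum_(p <- comps j.+1 n) count_mem (ri [:: head 0%N p], ri (behead p)) (dsh (ri w)))%N =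
     (\sum_(z <- dsh (ri w)) \sum_(p <- comps j.+1 n) (z == (ri [:: head 0%N p], ri (behead p))))%N.
    under eq_bigr => p _ do rewrite count_sum.
    by rewrite exchange_big.
  rewrite (eq_bigr (fun z : word * word => nat_of_bool (isE 1 z.1 && isE j z.2 && (size z.1 + size z.2 == n))%N)); last first.
    by case=> a b _; rewrite -sum_comps_g; apply: eq_bigr => p _; rewrite eq_sym.
  rewrite -count_sum.
  rewrite (eq_in_count (a1 := fun z : word * word => (isE 1 z.1 && isE j z.2 && (size z.1 + size z.2 == n))%N)
     (a2 := fun z : word * word => (size (ri w) == n) && (isE 1 z.1 && isE j z.2))); last first.
    by move=> z /(allP (dsh_size _)) /eqP ->; rewrite andbC.
  by rewrite /Qf; case: (size (ri w) == n); rewrite ?mul1n ?mul0n ?count_pred0.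
rewrite size_ri // QfC //=.
by case: (sumn w == n); case: (size w == j.+1); rewrite ?mul0n ?mul1n ?muln0 ?muln1.
Qed.
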